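(* For all integers $n\ge 4$ and $2\le k\le n/2$, there exists a feasible irredundant (circular) homogeneous PV graph $\vec G_R$ with $n$ sites and $k$ carriers such that $$\mathcal M(\vec G_R)\ \ge\ n(k-1).$$ (This holds even though the agent knows $\vec G_R$, $n$ and $k$ and has unlimited memory.)
   Context: A PV (periodically varying) system consists of a finite set $S$ of $n$ sites and a set $C$ of $k\le n$ carriers. Each carrier $c$ has a route $\pi(c)=\langle x_0,\dots,x_{p(c)-1}\rangle$, a finite sequence of sites of length $p(c)\ge1$ called its period; $\pi(c)[j]=x_{j\bmod p(c)}$. At each time $t\in\mathbb N$ carrier $c$ is at $\pi(c)[t]$ and moves to $\pi(c)[t+1]$. The PV graph $\vec G_R$ is the directed edge-labelled multigraph on $S$ with edges $(x_i,x_{i+1},i)$, $0\le i<p(c)$, for every carrier. The system is homogeneous if all $p(c)$ are equal, heterogeneous otherwise. A route is simple if $\pi(c)[i]\ne\pi(c)[i+1]$ for all $i$ and, whenever $\pi(c)[i]=\pi(c)[j]$ with $0\le i<j<p(c)$, then $\pi(c)[i+1]\ne\pi(c)[j+1]$. A route is irredundant (circular) if it is simple and the directed multigraph it describes is either a simple cycle (the sites $x_0,\dots,x_{p(c)-1}$ are distinct) or a virtual cycle, i.e. the closed walk of a simple traversal of a tree (each tree edge traversed once in each direction); in particular $p(c)\le 2(n-1)$. A PV graph is irredundant if all its routes are irredundant. An exploring agent is injected at time $0$ at a site of $\mathrm{start}(\vec G_R)=\{\pi(c)[0]:c\in C\}$; if at time $t$ it is at site $x$ it must either ride one step with some carrier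 $c$ with $\pi(c)[t]=x$ (one move) or halt; it cannot wait. A strategy solves PVG-Exploration of $\vec G_R$ if from every injection site the agent visits all sites and halts in finite time. $\vec G_R$ is feasible if from the starting point of every carrier some realizable walk visits all sites. For feasible $\vec G_R$, $\mathcal M(\vec G_R)$ denotes the minimum, over all deterministic strategies solving PVG-Exploration of $\vec G_R$ (which may use full knowledge of $\vec G_R$ and unlimited memory), of the maximum over injection sites of the number of moves performed. *)

(* Defs.v *)
(* Sites are the naturals 0..n-1, carriers are 0..k-1.
   A PV system is given by n and a list R of k routes (R`_c is the route of carrier c). *)
From mathcomp Require Import all_boot.
Set Implicit Arguments. Unset Strict Implicit. Unset Printing Implicit Defensive.

Definition route (R : seq (seq nat)) (c : nat) : seq nat := nth [::] R c.
Definition period (R : seq (seq nat)) (c : nat) : nat := size (route R c).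
Definition pos (R : seq (seq nat)) (c t : nat) : nat :=
  nth 0 (route R c) (t %% period R c).

Definition PV_system (n : nat) (R : seq (seq nat)) (k : nat) : Prop :=
  size R = k /\ forall c, c < k -> 0 < period R c /\ all (fun x => x < n) (route R c).

Definition homogeneous (R : seq (seq nat)) : Prop :=
  forall c d, c < size R -> d < size R -> period R c = period R d.

Definition simple_route (r : seq nat) : Prop :=
  let p := size r in let x := fun j => nth 0 r (j %% p) in
  (forall i, i < p -> x i <> x i.+1) /\
  (forall i j, i < j -> j < p -> x i = x j -> x i.+1 <> x j.+1).

Definition route_arcs (r : seq nat) : seq (nat * nat) :=
  let p := size r in
  [seq (nth 0 r (i %% p), nth 0 r (i.+1 %% p)) | i <- iota 0 p].

Definition route_edges (r : seq nat) : seq (nat * nat) :=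
  undup [seq (minn e.1 e.2, maxn e.1 e.2) | e <- route_arcs r].

Definition simple_cycle (r : seq nat) : Prop := uniq r.

(* virtual cycle: closed walk of a simple traversal of a tree: the undirected
   graph traversed (vertices = sites of r, edges = route_edges r; it is connected
   since it is traversed by a closed walk, and loop-free by simplicity) is a tree
   (connected with #edges = #vertices - 1), and each tree edge is traversed once in
   each direction. *)
Definition virtual_cycle (r : seq nat) : Prop :=
  size (route_edges r) = (size (undup r)).-1 /\
  (forall e, e \in route_arcs r -> (e.2, e.1) \in route_arcs r) /\
  uniq (route_arcs r) /\
  size r = 2 * size (route_edges r).

Definition irredundant_route (r : seq nat) : Prop :=
  simple_route r /\ (simple_cycle r \/ virtual_cycle r).

Definition irredundant (R : seq (seq nat)) : Prop :=
  forall c, c < size R -> irredundant_route (route R c).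

Definition is_start (R : seq (seq nat)) (s : nat) : Prop :=
  exists2 c, c < size R & pos R c 0 = s.

Definition realizable_walk (R : seq (seq nat)) (xs : seq nat) : Prop :=
  0 < size xs /\
  forall i, i < (size xs).-1 -> exists2 c, c < size R &
      pos R c i = nth 0 xs i /\ pos R c i.+1 = nth 0 xs i.+1.

Definition visits_all (n : nat) (xs : seq nat) : Prop :=
  forall x, x < n -> x \in xs.

Definition feasible (n : nat) (R : seq (seq nat)) : Prop :=
  forall c, c < size R -> exists xs, head 0 xs = pos R c 0 /\
     realizable_walk R xs /\ visits_all n xs.

(* A deterministic strategy: given the whole history of sites occupied so far
   (x_0 ... x_t, current site last; t is the current time), either ride carrier c
   (Some c) or halt (None).  With full knowledge of G_R this is the most general
   deterministic agent (everything else it could observe is determined by this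
   history and G_R). *)
Definition strategy := seq nat -> option nat.

(* The number of moves is (size xs).-1. *)
Definition execution (R : seq (seq nat)) (st : strategy) (xs : seq nat) : Prop :=
  0 < size xs /\
  (forall i, i < (size xs).-1 -> exists c, st (take i.+1 xs) = Some c /\
      c < size R /\ pos R c i = nth 0 xs i /\ pos R c i.+1 = nth 0 xs i.+1) /\
  st xs = None.

Definition solves (n : nat) (R : seq (seq nat)) (st : strategy) : Prop :=
  forall s, is_start R s -> exists xs, head 0 xs = s /\ execution R st xs /\ visits_all n xs.

(* M(G_R) >= b : every deterministic strategy solving PVG-Exploration performs
   at least b moves from some injection site (i.e. min over solving strategies of
   the max over injection sites of the number of moves is >= b) *)
Definition M_ge (n : nat) (R : seq (seq nat)) (b : nat) : Prop :=
  forall st : strategy, solves n R st ->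
    exists s xs, is_start R s /\ head 0 xs = s /\ execution R st xs /\ b <= (size xs).-1.

(* Main.v *)
Require Import Defs.
From mathcomp Require Import all_boot.
From Stdlib Require Import Lia.
Set Implicit Arguments. Unset Strict Implicit. Unset Printing Implicit Defensive.

Ltac slia0 := repeat match goal with
 | H : is_true (_ <= _) |- _ => apply (elimT leP) in H
 | H : is_true (_ == _) |- _ => apply (elimT eqP) in H
 | H : is_true (_ != _) |- _ => apply (elimT eqP) in H
 | H : (_ <= _) = true |- _ => apply (elimT leP) in H
 | H : (_ <= _) = false |- _ => apply (elimF leP) in H
 | H : (_ == _) = true |- _ => apply (elimT eqP) in H
 | H : (_ == _) = false |- _ => apply (elimF eqP) in H
 | |- is_true (_ <= _) => apply/leP
 | |- is_true (_ == _) => apply/eqP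
 | |- is_true (_ != _) => apply/eqP
 | |- (_ <= _) = true => apply/leP
 | |- (_ <= _) = false => apply/leP
 | |- (_ == _) = false => apply/eqP
 end.
Ltac dsplit := repeat match goal with H : _ \/ _ |- _ => destruct H end;
  repeat match goal with H : _ /\ _ |- _ => destruct H end.
Ltac slia := slia0; unfold addn, subn, muln, double, addn_rec, subn_rec, muln_rec, double_rec in *; lia.

Definition star (z : nat) (ls : seq nat) : seq nat := flatten [seq [:: z; l] | l <- ls].
Definition sarcs (z : nat) (ls : seq nat) : seq (nat * nat) :=
  flatten [seq [:: (z, l); (l, z)] | l <- ls].

Lemma size_star (z : nat) (ls : seq nat) : size (star z ls) = 2 * size ls.
Proof. elim: ls => [|l ls IH] //=. rewrite /star /= in IH *. rewrite IH. slia. Qed.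

Lemma size_sarcs (z : nat) (ls : seq nat) : size (sarcs z ls) = 2 * size ls.
Proof. elim: ls => [|l ls IH] //=. rewrite /sarcs /= in IH *. rewrite IH. slia. Qed.

Lemma nth_star (z : nat) (ls : seq nat) j : j < 2 * size ls ->
  nth 0 (star z ls) j = if odd j then nth 0 ls j./2 else z.
Proof.
elim: ls j => [|l ls IH] j //=.
rewrite /star /= in IH *.
case: j => [|[|j]] //= Hj.
rewrite IH; last by slia.
by rewrite negbK.
Qed.

Lemma nth_sarcs (z : nat) (ls : seq nat) j : j < 2 * size ls ->
  nth (0,0) (sarcs z ls) j = if odd j then (nth 0 ls j./2, z) else (z, nth 0 ls j./2).
Proof.
elim: ls j => [|l ls IH] j //=.
rewrite /sarcs /= in IH *.
case: j => [|[|j]] //= Hj.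
rewrite IH; last by slia.
by rewrite negbK.
Qed.

Lemma mem_star (z : nat) (ls : seq nat) x : 0 < size ls -> (x \in star z ls) = (x == z) || (x \in ls).
Proof.
elim: ls => [|l ls IH] //= _.
rewrite /star /= in IH *. rewrite !inE.
case: ls IH => [|l' ls'] IH /=; first by rewrite /= orbF.
rewrite IH //. by case: (x == z); case: (x == l).
Qed.

Lemma mem_sarcs (z : nat) (ls : seq nat) e : (e \in sarcs z ls) = has (fun l => (e == (z,l)) || (e == (l,z))) ls.
Proof.
elim: ls => [|l ls IH] //=. rewrite /sarcs /= in IH *. by rewrite !inE IH orbA.
Qed.

Lemma arcs_star (z : nat) (ls : seq nat) : 0 < size ls -> route_arcs (star z ls) = sarcs z ls.
Proof.
move=> Hs.
apply: (@eq_from_nth _ (0,0)).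
  by rewrite /route_arcs size_map size_iota size_star size_sarcs.
move=> i. rewrite /route_arcs size_map size_iota size_star => Hi.
rewrite (nth_map 0) ?size_iota // nth_iota // add0n nth_sarcs //.
rewrite (modn_small Hi) nth_star //.
case: (ltnP i.+1 (2 * size ls)) => Hi1.
  rewrite (modn_small Hi1) nth_star //=.
  by case Ho: (odd i) => //=; rewrite uphalf_half Ho.
have Heq : i.+1 = 2 * size ls by slia.
have Ho : odd i.
  by have := congr1 odd Heq; rewrite oddM /= => /negbFE.
rewrite Heq modnn nth_star; last by slia.
by rewrite Ho.
Qed.

Lemma half_eq i : i = odd i + 2 * i./2.
Proof. by rewrite mul2n odd_double_half. Qed.

Lemma half_lt i m : i < 2 * m -> i./2 < m.
Proof. move=> H. have := half_eq i. case: (odd i) => /= Hh; slia. Qed.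

Lemma memA (z : nat) (ls : seq nat) e : e \in sarcs z ls -> exists2 l', l' \in ls & (e = (z,l') \/ e = (l',z)).
Proof. rewrite mem_sarcs => /hasP [l' Hl' /orP [] /eqP ->]; exists l' => //; tauto. Qed.

Lemma uniq_sarcs (z : nat) (ls : seq nat) : uniq ls -> z \notin ls -> uniq (sarcs z ls).
Proof.
elim: ls => [|l ls IH] //=.
rewrite inE negb_or => /andP [Hl Hu] /andP [Hzl Hz].
change (uniq ((z,l) :: (l,z) :: sarcs z ls)).
rewrite /= IH // andbT !inE negb_or xpair_eqE (negPf Hzl) /=.
apply/andP; split; apply/negP; move/memA => [l' Hl' [] [] *]; subst.
- by rewrite Hl' in Hl.
- by rewrite Hl' in Hz.
- by rewrite Hl' in Hz.
- by rewrite Hl' in Hl.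
Qed.

Lemma leaf_neq (z : nat) (ls : seq nat) j : z \notin ls -> j < size ls -> nth 0 ls j <> z.
Proof. move=> Hz Hj Heq. by rewrite -Heq mem_nth in Hz. Qed.

Lemma star_simple (z : nat) (ls : seq nat) : uniq ls -> z \notin ls -> 0 < size ls -> simple_route (star z ls).
Proof.
move=> Hu Hz Hs. rewrite /simple_route size_star. split.
- move=> i Hi. rewrite (modn_small Hi) nth_star //.
  have Hh := half_eq i. have Hl := half_lt Hi.
  case: (ltnP i.+1 (2 * size ls)) => Hi1.
  + rewrite (modn_small Hi1) nth_star //= uphalf_half.
    case Ho: (odd i) => /=.
    * by apply: leaf_neq.
    * by move=> /esym; apply: leaf_neq.
  + have Heq : i.+1 = 2 * size ls by slia.
    have Ho : odd i by have := congr1 odd Heq; rewrite oddM /= => /negbFE.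
    rewrite Heq modnn nth_star; last by slia.
    rewrite Ho /=. by apply: leaf_neq.
- move=> i j Hij Hj.
  have Hi : i < 2 * size ls by slia.
  rewrite (modn_small Hi) (modn_small Hj) (nth_star z Hi) (nth_star z Hj).
  have Hhi := half_eq i. have Hli := half_lt Hi.
  have Hhj := half_eq j. have Hlj := half_lt Hj.
  case Hoi: (odd i); case Hoj: (odd j); rewrite ?Hoi ?Hoj /= in Hhi Hhj *.
  + move=> /eqP; rewrite nth_uniq // => /eqP E. slia.
  + move=> E; exfalso; exact: (leaf_neq Hz Hli E).
  + move=> E; exfalso; exact: (leaf_neq Hz Hlj (esym E)).
  + move=> _.
    have Hi1 : i.+1 < 2 * size ls by slia.
    have Hj1 : j.+1 < 2 * size ls by slia.
    rewrite (modn_small Hi1) (modn_small Hj1) (nth_star z Hi1) (nth_star z Hj1) /= Hoi Hoj /= !uphalf_half Hoi Hoj /=.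
    move=> /eqP; rewrite nth_uniq // => /eqP E. slia.
Qed.

Lemma size_undup_star (z : nat) (ls : seq nat) : uniq ls -> z \notin ls -> 0 < size ls ->
  size (undup (star z ls)) = (size ls).+1.
Proof.
move=> Hu Hz Hs.
have -> : size (undup (star z ls)) = size (z :: ls).
  apply: perm_size; apply: uniq_perm; rewrite ?undup_uniq //=; first by rewrite Hz Hu.
  move=> x. by rewrite mem_undup mem_star // inE.
by [].
Qed.


Lemma size_edges_star (z : nat) (ls : seq nat) : uniq ls -> z \notin ls -> 0 < size ls ->
  size (route_edges (star z ls)) = size ls.
Proof.
move=> Hu Hz Hs. rewrite /route_edges arcs_star //.
pose g := fun l : nat => (minn z l, maxn z l).
have ginj : injective g.
  move=> a b [] E1 E2. apply/eqP. rewrite -(eqn_add2l z) -!(addn_min_max z) E1 E2 //.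
have Hp : perm_eq (undup [seq (minn e.1 e.2, maxn e.1 e.2) | e <- sarcs z ls]) (map g ls).
  apply: uniq_perm; first exact: undup_uniq.
    by rewrite map_inj_uniq.
  move=> x. rewrite mem_undup. apply/mapP/mapP.
  - move=> [e /memA [l Hl [] ->] ->]; exists l => //=; by rewrite /g // (minnC l) (maxnC l).
  - move=> [l Hl ->]. exists (z, l) => //. rewrite mem_sarcs. apply/hasP. exists l => //. by rewrite eqxx.
by rewrite (perm_size Hp) size_map.
Qed.

Lemma star_irred (z : nat) (ls : seq nat) : uniq ls -> z \notin ls -> 0 < size ls ->
  irredundant_route (star z ls).
Proof.
move=> Hu Hz Hs. split; first exact: star_simple. right.
split; [|split; [|split]].
- by rewrite size_edges_star // size_undup_star.
- move=> e. rewrite arcs_star // => /memA [l Hl [] ->] /=; rewrite mem_sarcs; apply/hasP; exists l => //;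
  by rewrite eqxx ?orbT.
- by rewrite arcs_star // uniq_sarcs.
- by rewrite size_star size_edges_star.
Qed.

Lemma lower_bound n R k b (T : nat -> nat) q :
  size R = k -> 0 < k -> T 0 = 0 -> q < n ->
  (forall c d i, c < k -> d < k -> T c <= i -> pos R c i = pos R d i -> T d <= i) ->
  (forall c i, c < k -> T c <= i -> pos R c i = q -> b <= i) ->
  M_ge n R b.
Proof.
move=> Hk Hk0 HT0 Hq Hmeet Htgt st Hsol.
have Hs : is_start R (pos R 0 0) by exists 0 => //; rewrite Hk.
have [xs [Hh [[Hsz [Hstep Hend]] Hvis]]] := Hsol _ Hs.
exists (pos R 0 0), xs. split; [exact: Hs | split; [exact: Hh | split; [by split |]]].
have Inv : forall i, i < size xs -> exists2 c, c < k & T c <= i /\ pos R c i = nth 0 xs i.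
  elim=> [|i IH] Hi.
  - exists 0 => //. rewrite HT0; split => //.
  - have Hi' : i < (size xs).-1 by slia.
    have [c Hc [HTc Hpc]] := IH (ltnW Hi).
    have [d [_ [Hd [Hpd Hpd1]]]] := Hstep i Hi'.
    have Hd' : d < k by rewrite -Hk.
    exists d => //.
    split; last done.
    have HH := Hmeet c d i Hc Hd' HTc (etrans Hpc (esym Hpd)). slia.
have := Hvis q Hq. rewrite -index_mem => Hidx.
have [c Hc [HTc Hpc]] := Inv _ Hidx.
rewrite nth_index in Hpc; last by rewrite -index_mem.
have HH := Htgt c _ Hc HTc Hpc. apply: (leq_trans HH). by rewrite -ltnS prednK.
Qed.

Definition good R xs c := realizable_walk R xs /\ c < size R /\
  nth 0 xs (size xs).-1 = pos R c (size xs).-1.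

Definition ride R xs c j := xs ++ [seq pos R c (size xs + u) | u <- iota 0 j].

Definition ext (xs ys : seq nat) := head 0 ys = head 0 xs /\ {subset xs <= ys}.

Lemma ext_trans xs ys zs : ext xs ys -> ext ys zs -> ext xs zs.
Proof. move=> [H1 S1] [H2 S2]; split; [by rewrite H2 | move=> x /S1 /S2 //]. Qed.

Lemma ext_refl xs : ext xs xs.
Proof. by split. Qed.

Lemma size_ride R xs c j : size (ride R xs c j) = size xs + j.
Proof. by rewrite /ride size_cat size_map size_iota. Qed.

Lemma ride_nth R xs c j i : good R xs c -> (size xs).-1 <= i < size xs + j ->
  nth 0 (ride R xs c j) i = pos R c i.
Proof.
move=> [[Hsz _] [_ Hl]] /andP [H1 H2]. rewrite /ride nth_cat.
case: ltnP => Hi.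
- have -> : i = (size xs).-1 by slia.
  exact: Hl.
- rewrite (nth_map 0); last by rewrite size_iota; slia.
  rewrite nth_iota; last by slia.
  congr pos; slia.
Qed.

Lemma ride_good R xs c j : good R xs c -> good R (ride R xs c j) c.
Proof.
move=> G. have G' := G. move: G' => [[Hsz Hst] [Hc Hl]].
split; last split => //.
- split; first by rewrite size_ride; slia.
  move=> i. rewrite size_ride => Hi.
  case: (ltnP i.+1 (size xs)) => Hi1.
  + have [d Hd [E1 E2]] := Hst i ltac:(slia).
    exists d => //. rewrite /ride !nth_cat Hi1 (ltnW Hi1). by split.
  + exists c => //. rewrite !(ride_nth G) //; apply/andP; split; slia.
- rewrite size_ride ride_nth //; apply/andP; split; slia.
Qed.

Lemma ride_ext R xs c j : good R xs c -> ext xs (ride R xs c j).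
Proof.
move=> [[Hsz _] _]. split.
- by case: xs Hsz.
- move=> x Hx. by rewrite /ride mem_cat Hx.
Qed.

Lemma exists_time t r p : 0 < p -> r < p -> exists2 u, u < p & (t + u) %% p = r.
Proof.
move=> Hp Hr. exists ((r + (p - t %% p)) %% p); first by rewrite ltn_mod.
rewrite modnDmr {1}(divn_eq t p) -addnA modnMDl.
have Ht : t %% p < p by rewrite ltn_mod.
have -> : t %% p + (r + (p - t %% p)) = r + p by slia.
by rewrite modnDr modn_small.
Qed.

Lemma pos_mod R c t : pos R c t = nth 0 (route R c) (t %% period R c).
Proof. by []. Qed.

Lemma cover R xs c : good R xs c -> 0 < period R c ->
  exists ys, [/\ good R ys c, ext xs ys & {subset route R c <= ys}].
Proof.
move=> G Hp. exists (ride R xs c (period R c)). split.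
- exact: ride_good.
- exact: ride_ext.
- move=> x Hx.
  have Hr : index x (route R c) < period R c by rewrite /period index_mem.
  have [u Hu Et] := exists_time ((size xs).-1) Hp Hr.
  have : nth 0 (ride R xs c (period R c)) ((size xs).-1 + u) = x.
    rewrite ride_nth //; last by (move: G => [[Hsz _] _]); apply/andP; split; slia.
    by rewrite pos_mod Et nth_index.
  move=> <-. apply: mem_nth. rewrite size_ride. move: G => [[Hsz _] _]. slia.
Qed.

Lemma hop R xs c d r : good R xs c -> d < size R -> 0 < period R c -> r < period R c ->
  (forall t, t %% period R c = r -> pos R c t = pos R d t) ->
  exists ys, good R ys d /\ ext xs ys.
Proof.
move=> G Hd Hp Hr Hm.
have [u Hu Et] := exists_time ((size xs).-1) Hp Hr.
exists (ride R xs c u). split; last exact: ride_ext.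
have G' := ride_good u G. move: G' => [Hw [_ Hl]].
split => //. split => //.
rewrite Hl -Hm //.
move: G => [[Hsz _] _]. rewrite size_ride.
by have -> : (size xs + u).-1 = (size xs).-1 + u by slia.
Qed.

Lemma chain_feasible n R k p (phi : nat -> nat) :
  size R = k -> 0 < p ->
  (forall c, c < k -> period R c = p) ->
  (forall c, c.+1 < k -> phi c < p) ->
  (forall c t, c.+1 < k -> t %% p = phi c -> pos R c t = pos R c.+1 t) ->
  (forall x, x < n -> exists2 c, c < k & x \in route R c) ->
  feasible n R.
Proof.
move=> Hk Hp Hper Hphi Hmeet Hcov c0 Hc0.
set x0 := [:: pos R c0 0].
have G0 : good R x0 c0.
  split; last split => //. split => //.
have Down : forall j, j <= c0 -> exists xs, good R xs (c0 - j) /\ ext x0 xs.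
  elim=> [|j IH] Hj.
    by exists x0; rewrite subn0; split => //; apply: ext_refl.
  have [xs [G E]] := IH (ltnW Hj).
  have He : (c0 - j) = (c0 - j.+1).+1 by slia.
  rewrite He in G.
  have Hek : (c0 - j.+1).+1 < k by rewrite -He; slia.
  have Hpe := Hper _ Hek.
  have [ys [G' E']] := hop (d := c0 - j.+1) (r := phi (c0 - j.+1)) G
    ltac:(rewrite Hk; slia) ltac:(by rewrite Hpe) ltac:(rewrite Hpe; exact: Hphi)
    ltac:(move=> t; rewrite Hpe => Ht; symmetry; exact: Hmeet).
  exists ys; split => //. exact: ext_trans E E'.
have Up : forall d, d < k -> exists xs, [/\ good R xs d, ext x0 xs &
     forall e x, e <= d -> x \in route R e -> x \in xs].
  elim=> [|d IH] Hd.
    have [xs [G E]] := Down c0 (leqnn _).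
    rewrite subnn in G.
    have [ys [G' E' S']] := cover G ltac:(by rewrite Hper).
    exists ys; split.
    + exact: G'.
    + exact: ext_trans E E'.
    + move=> e x; rewrite leqn0 => /eqP -> /S'. done.
  have [xs [G E S]] := IH (ltnW Hd).
  have Hpd := Hper _ (ltnW Hd).
  have [ys [G1 E1]] := hop (d := d.+1) (r := phi d) G
    ltac:(by rewrite Hk) ltac:(by rewrite Hpd) ltac:(rewrite Hpd; exact: Hphi)
    ltac:(move=> t; rewrite Hpd => Ht; exact: Hmeet).
  have [zs [G2 E2 S2]] := cover G1 ltac:(by rewrite Hper).
  exists zs; split.
  + exact: G2.
  + exact: ext_trans E (ext_trans E1 E2).
  + move=> e x He Hx. case: (ltnP d e) => Hde.
    * have Ee : e = d.+1 by slia. subst e.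
      exact: S2.
    * apply: (proj2 E2); apply: (proj2 E1); exact: S Hde Hx.
have Hk1 : k.-1 < k by rewrite -Hk in Hc0 *; slia.
have [xs [[Hw _] [Hh _] S]] := Up _ Hk1.
exists xs; split; first by rewrite Hh.
split => // x Hx.
have [c Hc Hxc] := Hcov x Hx.
apply: S Hxc. slia.
Qed.

Definition P n := 2 * (n - 2).
Definition tau n c i := if odd c && (i == n - 2 - c) then i.-1
  else if odd c && (i == n - 3 - c) then i.+1 else i.
Definition leaf n c i := if c + 1 + tau n c i < n.-1 then c + 1 + tau n c i
  else c + 1 + tau n c i - n.-1.
Definition ctr n k c := if c == k.-1 then n.-1 else c.
Definition lvs n c := mkseq (leaf n c) (n - 2).
Definition rt n k c := star (ctr n k c) (lvs n c).
Definition RR n k := mkseq (rt n k) k.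
Definition phi n c := 2 * (n - 3 - c) + 1.
Definition Tf n c := if c == 0 then 0 else c * P n + 1 - 2 * c.

Lemma tau_cases n c i : c + 3 <= n ->
  ((nat_of_bool (odd c) = 0 \/ (i + c + 2 <> n /\ i + c + 3 <> n)) /\ tau n c i = i) \/
  (nat_of_bool (odd c) = 1 /\ (0 < c)%coq_nat /\ i + c + 2 = n /\ tau n c i + 1 = i) \/
  (nat_of_bool (odd c) = 1 /\ (0 < c)%coq_nat /\ i + c + 3 = n /\ tau n c i = i + 1).
Proof.
move=> Hcn.
rewrite /tau. case Ho: (odd c) => /=; last by left; split => //; left.
have Hc : (0 < c)%coq_nat by apply/ltP; exact: odd_gt0 Ho.
case: eqP => E1; first by right; left; do 2 (split => //); slia.
case: eqP => E2; first by right; right; do 2 (split => //); slia.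
left; split => //; right; split; slia.
Qed.

Lemma leaf_cases n c i : 0 < n -> ((c + 2 + tau n c i < n)%coq_nat /\ leaf n c i = c + 1 + tau n c i) \/
  ((n <= c + 2 + tau n c i)%coq_nat /\ leaf n c i + n = c + 2 + tau n c i).
Proof. move=> Hn. rewrite /leaf. case: ltnP => H; [left|right]; split => //; slia. Qed.

Section Constr.
Variables n k : nat.
Hypotheses (Hn : 5 <= n) (Hk : 2 <= k) (Hkn : k * 2 <= n).

Lemma c3 c : c < k -> c + 3 <= n.
Proof. move=> Hc. slia. Qed.

Lemma n0 : 0 < n.
Proof. slia. Qed.

Lemma leaf_lt c i : c < k -> i < n - 2 -> leaf n c i < n.-1.
Proof. move=> Hc Hi. have := tau_cases i (c3 Hc). have := leaf_cases c i n0. move=> ? ?. dsplit; slia. Qed.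

Lemma leaf_neq_c c i : c < k -> i < n - 2 -> leaf n c i <> c.
Proof. move=> Hc Hi. have := tau_cases i (c3 Hc). have := leaf_cases c i n0. move=> ? ?. dsplit; slia. Qed.

Lemma leaf_inj c i j : c < k -> i < n - 2 -> j < n - 2 -> leaf n c i = leaf n c j -> i = j.
Proof.
move=> Hc Hi Hj. have := tau_cases i (c3 Hc). have := leaf_cases c i n0.
have := tau_cases j (c3 Hc). have := leaf_cases c j n0. move=> ? ? ? ? ?. dsplit; slia.
Qed.

Lemma size_lvs c : size (lvs n c) = n - 2.
Proof. by rewrite /lvs size_mkseq. Qed.

Lemma uniq_lvs c : c < k -> uniq (lvs n c).
Proof.
move=> Hc. rewrite /lvs /mkseq map_inj_in_uniq ?iota_uniq //.
move=> i j; rewrite !mem_iota !add0n => /andP [_ Hi] /andP [_ Hj].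
exact: leaf_inj.
Qed.

Lemma mem_lvs c x : (x \in lvs n c) -> exists2 i, i < n - 2 & x = leaf n c i.
Proof. rewrite /lvs /mkseq => /mapP [i]; rewrite mem_iota add0n => /andP [_ Hi] ->. by exists i. Qed.

Lemma ctr_notin c : c < k -> ctr n k c \notin lvs n c.
Proof.
move=> Hc. apply/negP => /mem_lvs [i Hi E].
move: E; rewrite /ctr; case: eqP => _ E.
- by have := leaf_lt Hc Hi; rewrite -E ltnn.
- exact: (leaf_neq_c Hc Hi (esym E)).
Qed.

Lemma route_RR c : c < k -> route (RR n k) c = rt n k c.
Proof. move=> Hc. by rewrite /route /RR nth_mkseq. Qed.

Lemma size_RR : size (RR n k) = k.
Proof. by rewrite /RR size_mkseq. Qed.

Lemma period_RR c : c < k -> period (RR n k) c = P n.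
Proof. move=> Hc. by rewrite /period route_RR // /rt size_star size_lvs. Qed.

Lemma P_gt0 : 0 < P n.
Proof. rewrite /P. slia. Qed.

Lemma pos_RR c t : c < k -> pos (RR n k) c t =
  if odd (t %% P n) then leaf n c (t %% P n)./2 else ctr n k c.
Proof.
move=> Hc. rewrite pos_mod period_RR // route_RR // /rt.
have Hr : t %% P n < 2 * size (lvs n c) by rewrite size_lvs ltn_mod P_gt0.
rewrite nth_star //. case: ifP => // _.
rewrite /lvs nth_mkseq //. rewrite size_lvs in Hr. exact: half_lt.
Qed.

Lemma phiE c : c < k -> phi n c + 2 * c + 5 = 2 * n.
Proof. move=> Hc. rewrite /phi. slia. Qed.

Lemma meet_char c d t : c < k -> d < k -> c != d -> pos (RR n k) c t = pos (RR n k) d t ->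
  (d = c.+1 /\ t %% P n = phi n c) \/ (c = d.+1 /\ t %% P n = phi n d).
Proof.
move=> Hc Hd Hcd. rewrite !pos_RR //.
have Hr : t %% P n < P n by rewrite ltn_mod P_gt0.
have Hh := half_eq (t %% P n).
have HP : P n + 4 = 2 * n by rewrite /P; slia.
move/eqP: Hcd => Hcd.
case Ho: (odd (t %% P n)) => E; rewrite Ho /= in Hh.
- have Hj : (t %% P n)./2 < n - 2 by apply: half_lt; rewrite /P in Hr.
  have := tau_cases (t %% P n)./2 (c3 Hc). have := leaf_cases c (t %% P n)./2 n0.
  have := tau_cases (t %% P n)./2 (c3 Hd). have := leaf_cases d (t %% P n)./2 n0.
  have Fc := phiE Hc. have Fd := phiE Hd.
  move=> L1 T1 L2 T2.
  set j := (t %% P n)./2 in Hh Hj E L1 T1 L2 T2 *.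
  set tc := tau n c j in L2 T2. set td := tau n d j in L1 T1.
  set lc := leaf n c j in E L2. set ld := leaf n d j in E L1.
  set oc := nat_of_bool (odd c) in T2. set od := nat_of_bool (odd d) in T1.
  set r := t %% P n in Hr Hh *.
  set pc := phi n c in Fc *. set pd := phi n d in Fd *. set p := P n in HP Hr.
  clearbody j tc td lc ld oc od r pc pd p. clear Ho.
  dsplit; slia.
- move: E. rewrite /ctr. case: eqP => ?; case: eqP => ? E; slia.
Qed.

Lemma meet_exists c t : c.+1 < k -> t %% P n = phi n c -> pos (RR n k) c t = pos (RR n k) c.+1 t.
Proof.
move=> Hc Ht. have Hc' : c < k by slia.
rewrite !pos_RR //.
rewrite Ht.
have Ho : odd (phi n c) by rewrite /phi addn1 /= oddM.
rewrite Ho.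
have Hh := half_eq (phi n c). rewrite Ho /= in Hh.
have Fc := phiE Hc'.
have Hp : (nat_of_bool (odd c.+1) + nat_of_bool (odd c) = 1)%coq_nat by rewrite /=; case: (odd c).
have := tau_cases (phi n c)./2 (c3 Hc'). have := leaf_cases c (phi n c)./2 n0.
have := tau_cases (phi n c)./2 (c3 Hc). have := leaf_cases c.+1 (phi n c)./2 n0.
move=> L1 T1 L2 T2.
set j := (phi n c)./2 in Hh L1 T1 L2 T2 *.
set tc := tau n c j in L2 T2. set td := tau n c.+1 j in L1 T1.
set lc := leaf n c j in L2 *. set ld := leaf n c.+1 j in L1 *.
set oc := nat_of_bool (odd c) in T2 Hp. set od := nat_of_bool (odd c.+1) in T1 Hp.
set pc := phi n c in Fc Hh.
clearbody j tc td lc ld oc od pc. clear Ho Ht.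
dsplit; slia.
Qed.

Lemma target c t : c < k -> pos (RR n k) c t = n.-1 -> c = k.-1.
Proof.
move=> Hc. rewrite pos_RR //.
have Hr : t %% P n < P n by rewrite ltn_mod P_gt0.
case: ifP => _.
- move=> E. have Hj : (t %% P n)./2 < n - 2 by apply: half_lt; rewrite /P in Hr.
  by have := leaf_lt Hc Hj; rewrite E ltnn.
- rewrite /ctr. case: eqP => // ? E. slia.
Qed.

Lemma Tf_S c : Tf n c <= Tf n c.+1.
Proof.
rewrite /Tf /=. case: eqP => [->|_]; first by [].
have F : 2 * c <= c * P n by rewrite mulnC leq_mul2l; apply/orP; right; rewrite /P; slia.
rewrite mulSn. rewrite /P in F *. slia.
Qed.

Lemma Tf_meet c i : c.+1 < k -> Tf n c <= i -> i %% P n = phi n c -> Tf n c.+1 <= i.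
Proof.
move=> Hc HT Hi.
have Hc' : c < k by slia.
have Fc := phiE Hc'.
have HP : P n + 4 = 2 * n by rewrite /P; slia.
have Hd := divn_eq i (P n). rewrite Hi in Hd.
move: HT. rewrite /Tf /=. case: eqP => [E _|Hc0 HT].
  subst c. have Hm := leq_mod i (P n). rewrite Hi in Hm.
  rewrite mul1n. set p := P n in HP *. set pc := phi n 0 in Fc Hm. clearbody p pc. slia.
have F1 : 2 * c <= c * P n by rewrite mulnC leq_mul2l; apply/orP; right; rewrite /P; slia.
rewrite mulSn.
case: (leqP c (i %/ P n)) => Hq.
  have F2 : c * P n <= (i %/ P n) * P n by rewrite leq_mul2r Hq orbT.
  set p := P n in HP Hd F1 F2 HT *. set pc := phi n c in Fc Hd.
  set X := i %/ p * p in Hd F2. set Y := c * p in F1 F2 HT *. clearbody p pc X Y. slia.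
have F2 : (i %/ P n).+1 * P n <= c * P n by rewrite leq_mul2r Hq orbT.
rewrite mulSn in F2.
set p := P n in HP Hd F1 F2 HT *. set pc := phi n c in Fc Hd.
set X := i %/ p * p in Hd F2. set Y := c * p in F1 F2 HT *. clearbody p pc X Y. slia.
Qed.

Lemma Tf_final : n * (k - 1) <= Tf n k.-1.
Proof.
rewrite /Tf. case: eqP => H; first by slia.
apply/leP. move/leP: Hn. move/leP: Hk. move/leP: Hkn. rewrite /P.
unfold addn, subn, muln, addn_rec, subn_rec, muln_rec in *. intros. nia.
Qed.

Lemma main5 : exists R : seq (seq nat),
    [/\ PV_system n R k, homogeneous R, irredundant R, feasible n R &
        M_ge n R (n * (k - 1))].
Proof.
have Hk0 : 0 < k by slia.
exists (RR n k). split.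
- split; first exact: size_RR. move=> c Hc. rewrite period_RR //; split; first exact: P_gt0.
  rewrite route_RR // /rt. apply/allP => x. rewrite mem_star; last by rewrite size_lvs; slia.
  case/orP => [/eqP -> | /mem_lvs [i Hi ->]].
  + rewrite /ctr; case: eqP => _; slia.
  + have HH := leaf_lt Hc Hi. slia.
- move=> c d; rewrite size_RR => Hc Hd. by rewrite !period_RR.
- move=> c; rewrite size_RR => Hc. rewrite route_RR // /rt. apply: star_irred.
  + exact: uniq_lvs.
  + exact: ctr_notin.
  + rewrite size_lvs; slia.
- apply: (@chain_feasible n (RR n k) k (P n) (phi n)).
  + exact: size_RR.
  + exact: P_gt0.
  + move=> c Hc; exact: period_RR.
  + move=> c Hc. rewrite /phi /P. slia.
  + move=> c t Hc Ht. exact: meet_exists.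
  + move=> x Hx. case: (ltnP x n.-1) => Hx1.
    * exists 0 => //. rewrite route_RR // /rt mem_star; last by rewrite size_lvs; slia.
      case: (posnP x) => [->|Hx0].
        have -> : ctr n k 0 = 0 by rewrite /ctr; case: eqP => // E; slia. by rewrite eqxx.
      apply/orP; right. apply/mapP. exists x.-1.
        rewrite mem_iota leq0n add0n /=; slia.
      rewrite /leaf /tau /=. case: ltnP => HH; slia.
    * exists k.-1; first by slia.
      rewrite route_RR; last by slia.
      rewrite /rt mem_star; last by rewrite size_lvs; slia.
      rewrite /ctr eqxx. apply/orP; left. slia.
- apply: (@lower_bound n (RR n k) k (n * (k - 1)) (Tf n) n.-1).
  + exact: size_RR.
  + exact: Hk0.
  + by [].
  + slia.
  + move=> c d i Hc Hd HT E. case: (eqVneq c d) => [<- //|Hcd].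
    case: (meet_char Hc Hd Hcd E) => [[Ed Hi]|[Ec Hi]].
    * subst d. exact: Tf_meet Hd HT Hi.
    * subst c. exact: leq_trans (Tf_S d) HT.
  + move=> c i Hc HT E. have Ec := target Hc E. subst c.
    exact: leq_trans Tf_final HT.
Qed.
End Constr.

Definition R4 : seq (seq nat) := [:: star 0 [:: 1; 2; 3]; star 1 [:: 2; 0; 3]].

Lemma pos4 c i : c < 2 -> pos R4 c i = nth 0 (route R4 c) (i %% 6).
Proof. by case: c => [|[|c]]. Qed.

Lemma main4 k : 2 <= k -> k * 2 <= 4 -> exists R : seq (seq nat),
    [/\ PV_system 4 R k, homogeneous R, irredundant R, feasible 4 R &
        M_ge 4 R (4 * (k - 1))].
Proof.
move=> Hk Hkn. have Ek : k = 2 by slia. subst k.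
exists R4. split.
- split => //. by case=> [|[|c]].
- by case=> [|[|c]]; case=> [|[|d]].
- case=> [|[|c]] // _; apply: star_irred => //.
- apply: (@chain_feasible 4 R4 2 6 (fun _ => 5)) => //.
  + by case=> [|[|c]].
  + move=> c t; case: c => [|c] // _ Ht. by rewrite !pos4 // Ht.
  + move=> x Hx. exists 0 => //. by case: x Hx => [|[|[|[|x]]]].
- apply: (@lower_bound 4 R4 2 4 (fun c => if c == 0 then 0 else 5) 3) => //.
  + move=> c d i Hc Hd HT E.
    case: c Hc HT E => [|[|c]] // _ HT; case: d Hd => [|[|d]] // _; rewrite !pos4 //=.
    have Hm := leq_mod i 6. have Hr : i %% 6 < 6 by rewrite ltn_mod.
    move: Hm Hr. case: (i %% 6) => [|[|[|[|[|[|r]]]]]]; simpl; move=> Hm Hr E; try discriminate; slia.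
  + move=> c i Hc HT E.
    case: c Hc HT E => [|[|c]] //= _ HT; last by move=> _; slia.
    rewrite pos4 //=.
    have Hm := leq_mod i 6. have Hr : i %% 6 < 6 by rewrite ltn_mod.
    move: Hm Hr. case: (i %% 6) => [|[|[|[|[|[|r]]]]]]; simpl; move=> Hm Hr E; try discriminate; slia.
Qed.

Theorem mainTheorem7 (n k : nat) :
  4 <= n -> 2 <= k -> k * 2 <= n ->
  exists R : seq (seq nat),
    [/\ PV_system n R k, homogeneous R, irredundant R, feasible n R &
        M_ge n R (n * (k - 1))].
Proof.
move=> Hn Hk Hkn. case: (ltnP 4 n) => H.
- exact: (main5 H Hk Hkn).
- have E : n = 4 by slia.
  subst n. exact: main4.
Qed.
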